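(* Suppose that $\mathcal X$ is a wide family of subsets of $\mathbb N$ and $\mathfrak A=(\alpha_X:X\in\mathcal X)$ with $\alpha_X\in(71/72,1]$ for all $X\in\mathcal X$. Then any two elements $S,T\in\mathcal M_{\mathcal X,\mathfrak A}$ almost commute, i.e., $ST-TS\in\mathcal K(\ell_2)$.
   Context: Fix an orthonormal basis $(e_k)$ of $\ell_2$. For $A\subseteq\mathbb N$, $P_A$ is the projection onto $\overline{\mathrm{span}}\{e_{2k},e_{2k+1}:k\in A\}$; $H_n=\mathrm{span}\{e_{2n},e_{2n+1}\}$. $\mathcal A_0$ is the set of $T\in\mathcal B(\ell_2)$ with $\langle Te_k,e_m\rangle\ne0\Rightarrow\{k,m\}\subseteq\{2n,2n+1\}$ for some $n$, written $T=(T_n)$, $T_n\in\mathcal B(H_n)$; $\mathcal A_0(X)=\{T\in\mathcal A_0:T_n=0\ \forall n\notin X\}$. For $\alpha\in(71/72,1]$, $f_{\alpha,2n}=\alpha e_{2n}+\sqrt{1-\alpha^2}e_{2n+1}$, $f_{\alpha,2n+1}=\sqrt{1-\alpha^2}e_{2n}-\alpha e_{2n+1}$; $\mathcal D(X,\alpha)$: $T\in\mathcal A_0(X)$ with $T_n$ diagonal in $\{f_{\alpha,2n},f_{\alpha,2n+1}\}$ for $n\in X$; $\mathcal D_{\mathcal K}(X,\alpha)=\{S+R:S\in\mathcal D(X,\alpha),R\in\mathcal K(\ell_2)\cap\mathcal A_0(X)\}$. $\mathcal M_{\mathcal X,\mathfrak A}=\{T\in\mathcal A_0:P_XTP_X\in\mathcal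 D_{\mathcal K}(X,\alpha_X)\ \forall X\in\mathcal X\}$. $\mathcal X$ is wide if every infinite subset of $\mathbb N$ has infinite intersection with some member of $\mathcal X$. *)

(* Defs.v *)
From HB Require Import structures.
From mathcomp Require Import all_boot all_order all_algebra.
From mathcomp Require Import complex.
From mathcomp Require Import boolp classical_sets cardinality reals.
Set Implicit Arguments. Unset Strict Implicit. Unset Printing Implicit Defensive.
Import Order.TTheory GRing.Theory Num.Theory.
Local Open Scope ring_scope.
Local Open Scope classical_set_scope.
Local Open Scope complex_scope.

Section Defs.
Variable R : realType.
Local Notation C := R[i].

Definition vec := nat -> C.
Definition sqmod (z : C) : R := (complex.Re z) ^+ 2 + (complex.Im z) ^+ 2.
Definition psum2 (x : vec) (n : nat) : R := \sum_(k < n) sqmod (x k).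
Definition ell2 (x : vec) : Prop := exists M : R, forall n, psum2 x n <= M.

Definition vadd (x y : vec) : vec := fun k => x k + y k.
Definition vsub (x y : vec) : vec := fun k => x k - y k.
Definition vscale (c : C) (x : vec) : vec := fun k => c * x k.

(* operators are functions on sequences; only their restriction to l2 matters *)
Definition op := vec -> vec.

Definition bounded_op (T : op) : Prop :=
  [/\ forall x, ell2 x -> ell2 (T x),
      forall x y, ell2 x -> ell2 y -> T (vadd x y) = vadd (T x) (T y),
      forall c x, ell2 x -> T (vscale c x) = vscale c (T x)
    & exists c : R, 0 <= c /\ forall x (M : R), ell2 x ->
         (forall n, psum2 x n <= M) -> forall n, psum2 (T x) n <= c * M].

(* compact operator: bounded, and the image of every bounded sequence in l2
   has a Cauchy (hence, l2 being complete, convergent) subsequence *)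
Definition compact_op (T : op) : Prop :=
  bounded_op T /\
  forall (x : nat -> vec) (M : R),
    (forall j, ell2 (x j)) -> (forall j n, psum2 (x j) n <= M) ->
    exists phi : nat -> nat, (forall i, (phi i < phi i.+1)%N) /\
      forall eps : R, 0 < eps -> exists N, forall i j, (N <= i)%N -> (N <= j)%N ->
        forall n, psum2 (vsub (T (x (phi i))) (T (x (phi j)))) n <= eps.

Definition comp (S T : op) : op := fun x => S (T x).
Definition opsub (S T : op) : op := fun x => vsub (S x) (T x).

Definition e (k : nat) : vec := fun i => if i == k then 1 else 0.

Definition entry (T : op) (k m : nat) : C := T (e k) m.

(* A_0: <T e_k, e_m> <> 0 implies {k,m} ⊆ {2n,2n+1} for some n, i.e. k/2 = m/2 *)
Definition A0 (T : op) : Prop :=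
  bounded_op T /\ forall k m, entry T k m != 0 -> k./2 = m./2.

(* A_0(X): T_n = 0 for n ∉ X *)
Definition A0X (X : set nat) (T : op) : Prop :=
  A0 T /\ forall k m, k./2 = m./2 -> ~ X (k./2) -> entry T k m = 0.

(* P_A: projection onto closed span of e_{2k}, e_{2k+1}, k in A *)
Definition proj (A : set nat) : op :=
  fun x i => if `[< A (i./2) >] then x i else 0.

Definition f_even (alpha : R) (n : nat) : vec :=
  fun i => if i == n.*2 then alpha%:C
           else if i == n.*2.+1 then (Num.sqrt (1 - alpha ^+ 2))%:C else 0.
Definition f_odd (alpha : R) (n : nat) : vec :=
  fun i => if i == n.*2 then (Num.sqrt (1 - alpha ^+ 2))%:C
           else if i == n.*2.+1 then - alpha%:C else 0.

(* D(X, alpha): T in A_0(X), with T_n diagonal in {f_{alpha,2n}, f_{alpha,2n+1}}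
   for every n in X *)
Definition Dset (X : set nat) (alpha : R) (T : op) : Prop :=
  A0X X T /\ forall n, X n ->
    (exists lam : C, T (f_even alpha n) = vscale lam (f_even alpha n)) /\
    (exists mu : C, T (f_odd alpha n) = vscale mu (f_odd alpha n)).

Definition DKset (X : set nat) (alpha : R) (T : op) : Prop :=
  exists S Rk : op, [/\ Dset X alpha S, compact_op Rk, A0X X Rk &
    forall x, ell2 x -> T x = vadd (S x) (Rk x)].

Definition Mset (XX : set (set nat)) (alpha : set nat -> R) (T : op) : Prop :=
  A0 T /\ forall X, XX X -> DKset X (alpha X) (comp (proj X) (comp T (proj X))).

Definition wide (XX : set (set nat)) : Prop :=
  forall Y : set nat, infinite_set Y -> exists2 X, XX X & infinite_set (X `&` Y).

End Defs.

(* Main.v *)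
Require Import Defs.
From HB Require Import structures.
From mathcomp Require Import all_boot all_order all_algebra.
From mathcomp Require Import complex.
From mathcomp Require Import boolp classical_sets cardinality reals.
From mathcomp Require Import topology normedtype sequences.
From mathcomp Require Import ring lra zify.
Set Implicit Arguments. Unset Strict Implicit. Unset Printing Implicit Defensive.
Import Order.TTheory GRing.Theory Num.Theory.
Import numFieldNormedType.Exports.
Local Open Scope ring_scope.
Local Open Scope classical_set_scope.

Section Aux.
Variable R : realType.
Local Notation C := R[i].
Implicit Types (x y : vec R) (A : op R).

Lemma sqmodM (a b : C) : sqmod (a * b) = sqmod a * sqmod b.
Proof. case: a => a1 a2; case: b => b1 b2; rewrite /sqmod /=. ring. Qed.
Lemma sqmod_ge0 (a : C) : 0 <= sqmod a.
Proof. case: a => a1 a2; rewrite /sqmod /=. nra. Qed.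
Lemma sqmodD (a b : C) : sqmod (a + b) <= 2 * sqmod a + 2 * sqmod b.
Proof. case: a => a1 a2; case: b => b1 b2; rewrite /sqmod /=.
have := sqr_ge0 (a1 - b1); have := sqr_ge0 (a2 - b2). nra. Qed.
Lemma sqmodB (a b : C) : sqmod (a - b) <= 2 * sqmod a + 2 * sqmod b.
Proof. case: a => a1 a2; case: b => b1 b2; rewrite /sqmod /=.
have := sqr_ge0 (a1 + b1); have := sqr_ge0 (a2 + b2). nra. Qed.
Lemma sqmod_eq0 (a : C) : sqmod a = 0 -> a = 0.
Proof. case: a => a1 a2; rewrite /sqmod /= => h.
have h1 : a1 = 0 by nra. have h2 : a2 = 0 by nra. by rewrite h1 h2. Qed.
Lemma sqmod0 : sqmod (0 : C) = 0.
Proof. by rewrite /sqmod /= expr0n /= addr0. Qed.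
Lemma sqmod1 : sqmod (1 : C) = 1.
Proof. by rewrite /sqmod /= expr1n expr0n /= addr0. Qed.
Lemma sqmodN (a : C) : sqmod (- a) = sqmod a.
Proof. case: a => a1 a2; rewrite /sqmod /=. ring. Qed.

Lemma psum2S x n : psum2 x n.+1 = psum2 x n + sqmod (x n).
Proof. by rewrite /psum2 big_ord_recr. Qed.
Lemma psum2_0 x : psum2 x 0 = 0.
Proof. by rewrite /psum2 big_ord0. Qed.
Lemma psum2_ge0 x n : 0 <= psum2 x n.
Proof. by rewrite /psum2; apply: sumr_ge0 => i _; apply: sqmod_ge0. Qed.
Lemma psum2_mono x m n : (m <= n)%N -> psum2 x m <= psum2 x n.
Proof.
move=> /subnK <-; elim: (n - m)%N => [|k IH]; first by rewrite add0n.
by rewrite addSn psum2S; apply: le_trans IH _; rewrite lerDl sqmod_ge0.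
Qed.
Lemma sqmod_le_psum x n : sqmod (x n) <= psum2 x n.+1.
Proof. by rewrite psum2S lerDr psum2_ge0. Qed.

Lemma psum2_le x y z (a b : R) :
  (forall k, sqmod (x k) <= a * sqmod (y k) + b * sqmod (z k)) ->
  forall n, psum2 x n <= a * psum2 y n + b * psum2 z n.
Proof.
move=> h; elim=> [|n IH]; first by rewrite !psum2_0 !mulr0 addr0.
rewrite !psum2S; have := h n; lra.
Qed.

Lemma ell2_add x y : ell2 x -> ell2 y -> ell2 (vadd x y).
Proof.
move=> [M1 h1] [M2 h2]; exists (2 * M1 + 2 * M2) => n.
have := psum2_le (fun k => sqmodD (x k) (y k)) n.
by have := h1 n; have := h2 n; lra.
Qed.
Lemma ell2_sub x y : ell2 x -> ell2 y -> ell2 (vsub x y).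
Proof.
move=> [M1 h1] [M2 h2]; exists (2 * M1 + 2 * M2) => n.
have := psum2_le (fun k => sqmodB (x k) (y k)) n.
by have := h1 n; have := h2 n; lra.
Qed.
Lemma ell2_scale c x : ell2 x -> ell2 (vscale c x).
Proof.
move=> [M h]; exists (sqmod c * M) => n.
have hh : forall k, sqmod (vscale c x k) <= sqmod c * sqmod (x k) + 0 * sqmod (x k).
  by move=> k; rewrite mul0r addr0 /vscale sqmodM.
have := psum2_le hh n; rewrite mul0r addr0 => /le_trans; apply.
by apply: ler_wpM2l; [apply: sqmod_ge0 | apply: h].
Qed.

Lemma psum2_e k n : psum2 (e R k) n = if (k < n)%N then 1 else 0.
Proof.
elim: n => [|n IH]; first by rewrite psum2_0.
rewrite psum2S IH /e /=; case: (ltngtP k n) => [h|h|->].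
- by rewrite sqmod0 addr0 ltnS ltnW.
- by rewrite sqmod0 addr0 ltnS leqNgt h.
- by rewrite ltnSn sqmod1 add0r.
Qed.
Lemma psum2_e_le k n : psum2 (e R k) n <= 1.
Proof. by rewrite psum2_e; case: ifP. Qed.
Lemma ell2_e k : ell2 (e R k).
Proof. by exists 1; apply: psum2_e_le. Qed.

Lemma bo_l2 A x : bounded_op A -> ell2 x -> ell2 (A x).
Proof. by case=> h _ _ _; apply: h. Qed.
Lemma bo_add A x y : bounded_op A -> ell2 x -> ell2 y -> A (vadd x y) = vadd (A x) (A y).
Proof. by case=> _ h _ _; apply: h. Qed.
Lemma bo_scale A c x : bounded_op A -> ell2 x -> A (vscale c x) = vscale c (A x).
Proof. by case=> _ _ h _; apply: h. Qed.
Lemma bo_bound A : bounded_op A -> exists c : R, 0 <= c /\ forall x (M : R), ell2 x ->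
         (forall n, psum2 x n <= M) -> forall n, psum2 (A x) n <= c * M.
Proof. by case. Qed.
Lemma bo_sub A x y : bounded_op A -> ell2 x -> ell2 y -> A (vsub x y) = vsub (A x) (A y).
Proof.
move=> hA hx hy.
have -> : vsub x y = vadd x (vscale (-1) y).
  by apply: funext => k; rewrite /vsub /vadd /vscale mulN1r.
rewrite (bo_add hA hx (ell2_scale _ hy)) (bo_scale _ hA hy).
by apply: funext => k; rewrite /vsub /vadd /vscale mulN1r.
Qed.
Lemma entry_bound A : bounded_op A -> exists c : R, 0 <= c /\ forall k m, sqmod (entry A k m) <= c.
Proof.
move=> hA; have [c [c0 hc]] := bo_bound hA; exists c; split => // k m.
apply: le_trans (sqmod_le_psum _ _) _.
by rewrite -[c]mulr1; apply: hc; [apply: ell2_e | apply: psum2_e_le].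
Qed.

Lemma small_zero (d : C) (c : R) : 0 <= c -> (forall eps : R, 0 < eps -> sqmod d <= c * eps) -> d = 0.
Proof.
move=> c0 h; apply: sqmod_eq0; apply/eqP; rewrite eq_le sqmod_ge0 andbT.
apply/negPn/negP; rewrite -ltNge => hd.
have he : 0 < sqmod d / (2 * (c + 1)).
  by apply: divr_gt0 => //; lra.
have := h _ he.
have -> : c * (sqmod d / (2 * (c + 1))) = sqmod d * (c / (2 * (c + 1))).
  by rewrite mulrCA mulrA.
have hq : c / (2 * (c + 1)) < 1.
  by rewrite ltr_pdivrMr; lra.
have : sqmod d * (c / (2 * (c + 1))) < sqmod d * 1 by rewrite ltr_pM2l.
lra.
Qed.

Lemma half_dbl n : (n.*2)./2 = n.
Proof. by have := half_bit_double n false. Qed.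
Lemma half_dbl1 n : (n.*2.+1)./2 = n.
Proof. by have := half_bit_double n true; rewrite add1n. Qed.
Lemma block_cases k n : k./2 = n -> k = n.*2 \/ k = n.*2.+1.
Proof.
move=> <-; have := odd_double_half k; case: (odd k) => /= h.
  by right; rewrite -[in LHS]h add1n.
by left; rewrite -[in LHS]h add0n.
Qed.

End Aux.

Section Block.
Variable R : realType.
Local Notation C := R[i].
Implicit Types (x y : vec R) (A : op R).

Definition j0 m := (m./2).*2.
Definition j1 m := (m./2).*2.+1.
Definition trunc N x : vec R := fun i => if (i < N)%N then x i else 0.

Lemma ell2_trunc N x : ell2 x -> ell2 (trunc N x).
Proof.
move=> [M h]; exists M => n; apply: le_trans (h n).
have hh : forall k, sqmod (trunc N x k) <= 1 * sqmod (x k) + 0 * sqmod (x k).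
  move=> k; rewrite mul1r mul0r addr0 /trunc; case: ifP => // _.
  by rewrite sqmod0 sqmod_ge0.
by have := psum2_le hh n; rewrite mul1r mul0r addr0.
Qed.

Lemma truncS N x : trunc N.+1 x = vadd (trunc N x) (vscale (x N) (e R N)).
Proof.
apply: funext => i; rewrite /trunc /vadd /vscale /e ltnS leq_eqVlt.
case: (eqVneq i N) => [->|ne] /=; first by rewrite ltnn add0r mulr1.
by rewrite mulr0 addr0.
Qed.

Lemma A_trunc A x m N : A0 A -> ell2 x ->
  A (trunc N x) m = (if (j0 m < N)%N then entry A (j0 m) m * x (j0 m) else 0)
                  + (if (j1 m < N)%N then entry A (j1 m) m * x (j1 m) else 0).
Proof.
move=> [hb hA] hx; elim: N => [|N IH].
  have -> : trunc 0 x = vscale 0 (e R 0).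
    by apply: funext => i; rewrite /trunc /vscale mul0r.
  by rewrite (bo_scale _ hb (ell2_e _ _)) /vscale /= mul0r addr0.
rewrite truncS (bo_add hb (ell2_trunc _ hx) (ell2_scale _ (ell2_e _ _))).
rewrite (bo_scale _ hb (ell2_e _ _)) /vadd /vscale IH -/(entry A N m).
case: (eqVneq N (j0 m)) => [->|n0].
  rewrite ltnn ltnSn /j1 -/(j0 m) ltnNge leqnSn /= ltnn; ring.
case: (eqVneq N (j1 m)) => [->|n1].
  rewrite /j1 -/(j0 m) ltnSn ltnn ltnW ?ltnSn //; ring.
have -> : entry A N m = 0.
  case: (eqVneq (entry A N m) 0) => // /hA /block_cases [h|h].
    by rewrite h eqxx in n0.
  by rewrite h eqxx in n1.
have -> : (j0 m < N.+1)%N = (j0 m < N)%N by rewrite ltnS leq_eqVlt eq_sym (negbTE n0).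
have -> : (j1 m < N.+1)%N = (j1 m < N)%N by rewrite ltnS leq_eqVlt eq_sym (negbTE n1).
by rewrite mulr0 addr0.
Qed.

Lemma psum2_tail x N n : psum2 (vsub x (trunc N x)) n = psum2 x n - psum2 x (minn n N).
Proof.
elim: n => [|n IH]; first by rewrite min0n psum2_0 subrr.
rewrite !psum2S IH /vsub /trunc /=; case: (ltnP n N) => h.
  rewrite !subrr sqmod0 addr0.
  have -> : minn n.+1 N = n.+1 by apply/minn_idPl.
  by rewrite psum2S subrr.
have -> : minn n.+1 N = N by apply/minn_idPr; apply: leqW.
rewrite subr0; ring.
Qed.

Lemma tail_small x : ell2 x -> forall eps : R, 0 < eps -> exists N0, forall N, (N0 <= N)%N ->
  forall n, psum2 (vsub x (trunc N x)) n <= eps.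
Proof.
move=> [M hM] eps he.
have hs : has_sup (range (psum2 x)).
  split; first by exists (psum2 x 0); exists 0%N.
  by exists M => _ [n _ <-]; apply: hM.
have [_ [N0 _ <-] hN0] := sup_adherent he hs.
exists N0 => N hN n; rewrite psum2_tail.
case: (leqP n N) => h.
  by rewrite subrr ltW.
have h1 : psum2 x n <= sup (range (psum2 x)).
  by apply: sup_upper_bound => //; exists n.
have h2 := psum2_mono x hN.
lra.
Qed.

Lemma blockP A x m : A0 A -> ell2 x ->
  A x m = entry A (j0 m) m * x (j0 m) + entry A (j1 m) m * x (j1 m).
Proof.
move=> hA hx; have [c [c0 hc]] := bo_bound hA.1.
apply/eqP; rewrite -subr_eq0; apply/eqP; apply: (small_zero c0) => eps he.
have [N0 hN0] := tail_small hx he.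
pose N := maxn N0 (j1 m).+1.
have eqT : A (trunc N x) m = entry A (j0 m) m * x (j0 m) + entry A (j1 m) m * x (j1 m).
  rewrite A_trunc //.
  have -> : (j0 m < N)%N = true.
    by apply: leq_trans (leq_maxr _ _); rewrite /j1 ltnS leqnSn.
  by have -> : (j1 m < N)%N = true by apply: leq_trans (leq_maxr _ _).
rewrite -eqT.
have -> : A x m - A (trunc N x) m = A (vsub x (trunc N x)) m.
  by rewrite (bo_sub hA.1 hx (ell2_trunc _ hx)).
apply: le_trans (sqmod_le_psum _ m) _.
apply: hc; first by apply: ell2_sub => //; apply: ell2_trunc.
by apply: hN0; apply: leq_maxl.
Qed.

End Block.

Lemma inf_unb (Y : set nat) : infinite_set Y -> forall N, exists n, (N <= n)%N /\ Y n.
Proof.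
move=> hY N; apply: contrapT => h; apply: hY.
apply: (@sub_finite_set _ _ `I_N); last exact: finite_II.
move=> n Yn /=; rewrite ltnNge; apply/negP => hn; apply: h; by exists n.
Qed.

Lemma sinc_lt (f : nat -> nat) : (forall i, (f i < f i.+1)%N) -> forall i j, (i < j)%N -> (f i < f j)%N.
Proof. by move=> h; apply: (@homo_ltn _ f (fun a b => (a < b)%N)) => // y x z; apply: ltn_trans. Qed.

Lemma sinc_ge (f : nat -> nat) : (forall i, (f i < f i.+1)%N) -> forall i, (i <= f i)%N.
Proof. by move=> h; elim=> // i IH; apply: leq_ltn_trans IH (h i). Qed.

Lemma unb_inf (Y : set nat) : (forall N, exists n, (N <= n)%N /\ Y n) -> infinite_set Y.
Proof.
move=> h; have [g hg] := choice h.
pose hh := fix hh i := if i is i'.+1 then g (hh i').+1 else g 0%N.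
have inc : forall i, (hh i < hh i.+1)%N by move=> i; exact: (hg _).1.
apply/infiniteP/pcard_leP/injfunPex; exists hh.
  by move=> [|i] _; exact: (hg _).2.
move=> i j _ _ eq; case: (ltngtP i j) => // hij.
  by have := sinc_lt inc hij; rewrite eq ltnn.
by have := sinc_lt inc hij; rewrite eq ltnn.
Qed.

Section Ops.
Variable R : realType.
Local Open Scope complex_scope.
Local Notation C := R[i].
Implicit Types (x y : vec R) (A : op R).

Lemma cpt_entries K : compact_op K -> A0 K -> forall d : R, 0 < d ->
  exists N, forall k m, (N <= k)%N -> sqmod (entry K k m) < d.
Proof.
move=> [hb hc] hA d hd; apply: contrapT => H.
have H' : forall N, exists km : nat * nat, (N <= km.1)%N /\ d <= sqmod (entry K km.1 km.2).
  move=> N; apply: contrapT => HN; apply: H; exists N => k m hk.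
  rewrite ltNge; apply/negP => hle; apply: HN; by exists (k, m).
have [g hg] := choice H'.
pose p := fix p i := if i is i'.+1 then g ((p i').1 + 2)%N else g 0%N.
have hp : forall i, ((p i).1 + 2 <= (p i.+1).1)%N by move=> i; exact: (hg _).1.
have hmono : forall i j, (i < j)%N -> ((p i).1 + 2 <= (p j).1)%N.
  apply: (@homo_ltn _ p (fun a b => (a.1 + 2 <= b.1)%N)) => // y x z h1 h2; lia.
have hd' : forall i, d <= sqmod (entry K (p i).1 (p i).2) by move=> [|i]; exact: (hg _).2.
have [phi [hphi hcau]] := hc (fun i => e R (p i).1) 1 (fun j => ell2_e _ _)
   (fun j n => psum2_e_le _ _ _).
have hd2 : 0 < d / 2 by lra.
have [N hN] := hcau _ hd2.
have := hN N N.+1 (leqnn _) (leqnSn _) ((p (phi N)).2).+1.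
set i := phi N; set j := phi N.+1.
have ij : (i < j)%N by apply: hphi.
move=> /(le_trans (sqmod_le_psum _ _)).
rewrite /vsub -/(entry K (p i).1 (p i).2) -/(entry K (p j).1 (p i).2).
have -> : entry K (p j).1 (p i).2 = 0.
  case: (eqVneq (entry K (p j).1 (p i).2) 0) => // /hA.2 hj.
  have hi : (p i).1./2 = (p i).2./2.
    apply: hA.2; apply/negP => /eqP h0; have := hd' i; rewrite h0 sqmod0; lra.
  have := hmono _ _ ij; rewrite addn2 => /half_leq; rewrite /= hj -hi; lia.
by rewrite subr0; have := hd' i; lra.
Qed.

Lemma proj_e (X : set nat) k : X (k./2) -> proj X (e R k) = e R k.
Proof.
move=> hk; apply: funext => i; rewrite /proj /e; case: (eqVneq i k) => [->|_].
  by rewrite asboolT.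
by case: ifP.
Qed.

Lemma proj_in (X : set nat) y m : X (m./2) -> proj X y m = y m.
Proof. by move=> hm; rewrite /proj asboolT. Qed.

Lemma entry_DK (X : set nat) (S S' K : op R) k m :
  (forall x, ell2 x -> comp (proj X) (comp S (proj X)) x = vadd (S' x) (K x)) ->
  X (k./2) -> X (m./2) -> entry S k m = entry S' k m + entry K k m.
Proof.
move=> h hk hm; have := f_equal (fun v => v m) (h _ (ell2_e R k)).
by rewrite /comp /= proj_e // proj_in.
Qed.

Definition Dent (a b lam mu : C) (i j : bool) : C :=
  if i then (if j then b * lam * b + a * mu * a else b * lam * a - a * mu * b)
  else (if j then a * lam * b - b * mu * a else a * lam * a + b * mu * b).

Lemma Dent_lemma (X : set nat) (alpha : R) (S' : op R) n :
  Dset X alpha S' -> X n -> 0 <= alpha <= 1 ->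
  exists lam mu, forall k m, k./2 = n -> m./2 = n ->
    entry S' k m = Dent alpha%:C (Num.sqrt (1 - alpha ^+ 2))%:C lam mu (odd k) (odd m).
Proof.
move=> [[[hb _] _] heig] hn /andP[a0 a1].
have [[lam hl] [mu hm]] := heig n hn.
exists lam, mu.
set a : C := alpha%:C; set b : C := (Num.sqrt (1 - alpha ^+ 2))%:C.
have hab : a * a + b * b = 1.
  have h1 : 0 <= 1 - alpha ^+ 2 by nra.
  have := sqr_sqrtr h1; rewrite /a /b => hs.
  apply/eqP; rewrite eq_complex /= !mul0r !mulr0 !subr0 !addr0 -!expr2 hs.
  by apply/andP; split; apply/eqP; ring.
have ne : (n.*2.+1 == n.*2) = false by rewrite eqn_leq ltnn.
have ne' : (n.*2 == n.*2.+1) = false by rewrite eqn_leq ltnn andbF.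
have fe : f_even alpha n = vadd (vscale a (e R n.*2)) (vscale b (e R n.*2.+1)).
  apply: funext => i; rewrite /f_even /vadd /vscale /e /a /b.
  case: (eqVneq i n.*2) => [->|h1] /=; first by rewrite ?ne ?ne'; ring.
  by case: (eqVneq i n.*2.+1) => [_|_] /=; ring.
have fo : f_odd alpha n = vadd (vscale b (e R n.*2)) (vscale (- a) (e R n.*2.+1)).
  apply: funext => i; rewrite /f_odd /vadd /vscale /e /a /b.
  case: (eqVneq i n.*2) => [->|h1] /=; first by rewrite ?ne ?ne'; ring.
  by case: (eqVneq i n.*2.+1) => [_|_] /=; ring.
have lfe : ell2 (f_even alpha n).
  by rewrite fe; apply: ell2_add; apply: ell2_scale; apply: ell2_e.
have lfo : ell2 (f_odd alpha n).
  by rewrite fo; apply: ell2_add; apply: ell2_scale; apply: ell2_e.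
have e0 : e R n.*2 = vadd (vscale a (f_even alpha n)) (vscale b (f_odd alpha n)).
  rewrite fe fo; apply: funext => i; rewrite /vadd /vscale /e.
  case: (eqVneq i n.*2) => [->|h1] /=; first by rewrite ?ne ?ne' -[in LHS]hab; ring.
  by case: (eqVneq i n.*2.+1) => [_|_] /=; ring.
have e1 : e R n.*2.+1 = vadd (vscale b (f_even alpha n)) (vscale (- a) (f_odd alpha n)).
  rewrite fe fo; apply: funext => i; rewrite /vadd /vscale /e.
  case: (eqVneq i n.*2) => [->|h1] /=; first by rewrite ?ne ?ne'; ring.
  by case: (eqVneq i n.*2.+1) => [_|_] /=; [rewrite -[in LHS]hab; ring | ring].
have Se0 : S' (e R n.*2) = vadd (vscale (a * lam) (f_even alpha n)) (vscale (b * mu) (f_odd alpha n)).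
  rewrite e0 (bo_add hb (ell2_scale _ lfe) (ell2_scale _ lfo)) !(bo_scale _ hb) // hl hm.
  by apply: funext => i; rewrite /vadd /vscale !mulrA.
have Se1 : S' (e R n.*2.+1) = vadd (vscale (b * lam) (f_even alpha n)) (vscale (- a * mu) (f_odd alpha n)).
  rewrite e1 (bo_add hb (ell2_scale _ lfe) (ell2_scale _ lfo)) !(bo_scale _ hb) // hl hm.
  by apply: funext => i; rewrite /vadd /vscale !mulrA.
have fe0 : f_even alpha n n.*2 = a by rewrite /f_even eqxx.
have fe1 : f_even alpha n n.*2.+1 = b by rewrite /f_even ne eqxx.
have fo0 : f_odd alpha n n.*2 = b by rewrite /f_odd eqxx.
have fo1 : f_odd alpha n n.*2.+1 = - a by rewrite /f_odd ne eqxx.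
move=> k m /block_cases [->|->] /block_cases [->|->];
  rewrite /entry ?Se0 ?Se1 /vadd /vscale ?fe0 ?fe1 ?fo0 ?fo1 /Dent /= ?odd_double /=; ring.
Qed.

Definition cmp (s1 s2 s3 s4 t1 t2 t3 t4 : C) := s1 * t3 + s2 * t4 - (t1 * s3 + t2 * s4).
Definition cm A B k m :=
  cmp (entry A (j0 m) m) (entry A (j1 m) m) (entry A k (j0 m)) (entry A k (j1 m))
      (entry B (j0 m) m) (entry B (j1 m) m) (entry B k (j0 m)) (entry B k (j1 m)).

Lemma j00 m : j0 (j0 m) = j0 m. Proof. by rewrite /j0 half_dbl. Qed.
Lemma j10 m : j1 (j0 m) = j1 m. Proof. by rewrite /j1 /j0 half_dbl. Qed.
Lemma j01 m : j0 (j1 m) = j0 m. Proof. by rewrite /j0 /j1 half_dbl1. Qed.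
Lemma j11 m : j1 (j1 m) = j1 m. Proof. by rewrite /j1 half_dbl1. Qed.

Lemma U_formula (S T : op R) x m : A0 S -> A0 T -> ell2 x ->
  opsub (comp S T) (comp T S) x m = cm S T (j0 m) m * x (j0 m) + cm S T (j1 m) m * x (j1 m).
Proof.
move=> hS hT hx; rewrite /opsub /comp /vsub.
rewrite (blockP _ hS (bo_l2 hT.1 hx)) (blockP _ hT (bo_l2 hS.1 hx)).
rewrite !(blockP _ hT hx) !(blockP _ hS hx) !j00 !j10 !j01 !j11 /cm /cmp; ring.
Qed.

Lemma cmp_bound (s1 s2 s3 s4 t1 t2 t3 t4 : C) (U V : R) :
  sqmod s1 <= U -> sqmod s2 <= U -> sqmod s3 <= U -> sqmod s4 <= U ->
  sqmod t1 <= V -> sqmod t2 <= V -> sqmod t3 <= V -> sqmod t4 <= V ->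
  sqmod (cmp s1 s2 s3 s4 t1 t2 t3 t4) <= 16 * (U * V).
Proof.
move=> h1 h2 h3 h4 g1 g2 g3 g4.
have pb : forall s t, sqmod s <= U -> sqmod t <= V -> sqmod (s * t) <= U * V.
  move=> s t hs ht; rewrite sqmodM; apply: ler_pM => //; exact: sqmod_ge0.
have pb' : forall s t, sqmod s <= U -> sqmod t <= V -> sqmod (t * s) <= U * V.
  by move=> s t hs ht; rewrite mulrC; apply: pb.
have := pb _ _ h1 g3; have := pb _ _ h2 g4; have := pb' _ _ h3 g1; have := pb' _ _ h4 g2.
have := sqmodB (s1 * t3 + s2 * t4) (t1 * s3 + t2 * s4).
have := sqmodD (s1 * t3) (s2 * t4); have := sqmodD (t1 * s3) (t2 * s4).
rewrite /cmp; lra.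
Qed.

Lemma cm_bound (S T : op R) : bounded_op S -> bounded_op T ->
  exists Bc : R, 0 <= Bc /\ forall k m, sqmod (cm S T k m) <= Bc.
Proof.
move=> hS hT; have [cS [cS0 hcS]] := entry_bound hS; have [cT [cT0 hcT]] := entry_bound hT.
exists (16 * (cS * cT)); split; first by apply: mulr_ge0 => //; apply: mulr_ge0.
by move=> k m; apply: cmp_bound.
Qed.

End Ops.

Lemma BW_cauchy (R : realType) (u : nat -> R) (B : R) : (forall n, `|u n| <= B) ->
  exists f : nat -> nat, (forall i, (f i < f i.+1)%N) /\
   forall eps, 0 < eps -> exists N, forall a b, (N <= a)%N -> (N <= b)%N ->
     `|u (f a) - u (f b)| <= eps.
Proof.
move=> hB.
have bu : bounded_fun u.
  exists B; split; first exact: num_real.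
  move=> M hM x _ /=; exact: le_trans (hB x) (ltW hM).
have [f finc /cvg_ex [l hl]] := bolzano_weierstrass bu.
exists f; split.
  by move=> i; move/increasing_seqP: finc; apply.
move=> eps he.
have he2 : 0 < eps / 2 by lra.
have := (cvgrPdist_le _ _).1 hl (eps / 2) he2.
move=>  [N _ hN]; exists N => a b ha hb.
have := hN a ha; have := hN b hb => /= h1 h2.
have -> : u (f a) - u (f b) = (l - u (f b)) - (l - u (f a)) by ring.
apply: le_trans (ler_normB _ _) _; lra.
Qed.

Section Diag.
Variable R : realType.
Local Notation C := R[i].

Lemma sqmod_sub (z w : C) : sqmod (z - w) =
  (complex.Re z - complex.Re w) ^+ 2 + (complex.Im z - complex.Im w) ^+ 2.
Proof. by case: z => a b; case: w => c d; rewrite /sqmod /=. Qed.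

Lemma re_bound (z : C) : `|complex.Re z| <= sqmod z + 1.
Proof.
case: z => a b; rewrite /sqmod /=; rewrite ler_norml.
have := sqr_ge0 b; have := sqr_ge0 (a + 1/2); have := sqr_ge0 (a - 1/2).
move=> h1 h2 h3; apply/andP; split; nra.
Qed.
Lemma im_bound (z : C) : `|complex.Im z| <= sqmod z + 1.
Proof.
case: z => a b; rewrite /sqmod /=; rewrite ler_norml.
have := sqr_ge0 a; have := sqr_ge0 (b + 1/2); have := sqr_ge0 (b - 1/2).
move=> h1 h2 h3; apply/andP; split; nra.
Qed.

Lemma sq_small (t e eta : R) : `|t| <= e -> 0 <= e -> e <= 1 -> e <= eta -> t ^+ 2 <= eta.
Proof. rewrite ler_norml => /andP[h1 h2] h3 h4 h5; nra. Qed.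

Lemma BWC (u : nat -> C) (B : R) : (forall n, sqmod (u n) <= B) ->
  exists f : nat -> nat, (forall i, (f i < f i.+1)%N) /\
   forall eta, 0 < eta -> exists N, forall a b, (N <= a)%N -> (N <= b)%N ->
     sqmod (u (f a) - u (f b)) <= eta.
Proof.
move=> hB.
have [f1 [f1i c1]] := @BW_cauchy R (fun n => complex.Re (u n)) (B + 1)
   (fun n => le_trans (re_bound _) (lerD (hB n) (lexx _))).
have [f2 [f2i c2]] := @BW_cauchy R (fun n => complex.Im (u (f1 n))) (B + 1)
   (fun n => le_trans (im_bound _) (lerD (hB _) (lexx _))).
exists (f1 \o f2); split.
  by move=> i /=; apply: (sinc_lt f1i (f2i i)).
move=> eta he.
pose e' := Num.min 1 (eta / 2).
have e'0 : 0 < e' by rewrite lt_min ltr01 /=; lra.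
have e'1 : e' <= 1 by rewrite ge_min lexx.
have e'2 : e' <= eta / 2 by rewrite ge_min lexx orbT.
have [N1 h1] := c1 _ e'0; have [N2 h2] := c2 _ e'0.
exists (maxn N1 N2) => a b ha hb /=.
rewrite sqmod_sub.
have r1 : (complex.Re (u (f1 (f2 a))) - complex.Re (u (f1 (f2 b)))) ^+ 2 <= eta / 2.
  apply: (sq_small _ (ltW e'0) e'1 e'2).
  apply: h1.
    exact: leq_trans (leq_trans (leq_maxl _ _) ha) (sinc_ge f2i a).
  exact: leq_trans (leq_trans (leq_maxl _ _) hb) (sinc_ge f2i b).
have r2 : (complex.Im (u (f1 (f2 a))) - complex.Im (u (f1 (f2 b)))) ^+ 2 <= eta / 2.
  apply: (sq_small _ (ltW e'0) e'1 e'2).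
  by apply: h2; [apply: leq_trans (leq_maxr _ _) ha | apply: leq_trans (leq_maxr _ _) hb].
lra.
Qed.

Definition cau (y : nat -> nat -> C) (h : nat -> nat) k :=
  forall eta : R, 0 < eta -> exists N, forall a b, (N <= a)%N -> (N <= b)%N ->
     sqmod (y (h a) k - y (h b) k) <= eta.

Lemma diag (y : nat -> nat -> C) (B : R) : (forall j k, sqmod (y j k) <= B) ->
  exists d : nat -> nat, (forall i, (d i < d i.+1)%N) /\ forall k, cau y d k.
Proof.
move=> hB.
have step : forall p : (nat -> nat) * nat, exists f : nat -> nat,
    (forall i, (f i < f i.+1)%N) /\ cau y (p.1 \o f) p.2.
  move=> [g k]; have [f [fi hf]] := @BWC (fun n => y (g n) k) B (fun n => hB (g n) k).
  by exists f; split.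
have [F hF] := choice step.
pose Phi := fix Phi k := if k is k'.+1 then (Phi k') \o F (Phi k', k'.+1) else F (id, 0%N).
have inc : forall k i, (Phi k i < Phi k i.+1)%N.
  elim=> [|k IH] i /=; first exact: (hF (id, 0%N)).1.
  by apply: sinc_lt => //; exact: (hF (Phi k, k.+1)).1.
have cauk : forall k, cau y (Phi k) k.
  case=> [|k] /=; first exact: (hF (id, 0%N)).2.
  exact: (hF (Phi k, k.+1)).2.
have sub : forall k i, (k <= i)%N -> exists G : nat -> nat,
    (forall t, (t <= G t)%N) /\ forall t, Phi i t = Phi k (G t).
  move=> k; elim=> [|i IH].
    by rewrite leqn0 => /eqP ->; exists id.
  rewrite leq_eqVlt => /orP[/eqP ->|]; first by exists id.
  rewrite ltnS => /IH [G [hG1 hG2]].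
  exists (G \o F (Phi i, i.+1)); split.
    move=> t /=; apply: leq_trans (hG1 _).
    exact: sinc_ge (hF (Phi i, i.+1)).1 t.
  by move=> t /=; rewrite hG2.
exists (fun i => Phi i i); split.
  move=> i /=; apply: sinc_lt; first exact: inc.
  apply: leq_trans (sinc_ge (hF (Phi i, i.+1)).1 i.+1); exact: ltnSn.
move=> k eta he; have [N hN] := cauk k eta he.
exists (maxn N k) => a b ha hb.
have [Ga [hGa1 hGa2]] := sub k a (leq_trans (leq_maxr _ _) ha).
have [Gb [hGb1 hGb2]] := sub k b (leq_trans (leq_maxr _ _) hb).
rewrite hGa2 hGb2; apply: hN.
  exact: leq_trans (leq_trans (leq_maxl _ _) ha) (hGa1 a).
exact: leq_trans (leq_trans (leq_maxl _ _) hb) (hGb1 b).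
Qed.

End Diag.

Section Key.
Variable R : realType.
Local Notation C := R[i].

Lemma cmp_split (s1 s2 s3 s4 t1 t2 t3 t4 u1 u2 u3 u4 v1 v2 v3 v4 : C) :
  cmp (s1 + u1) (s2 + u2) (s3 + u3) (s4 + u4) (t1 + v1) (t2 + v2) (t3 + v3) (t4 + v4) =
  cmp s1 s2 s3 s4 t1 t2 t3 t4 + (cmp s1 s2 s3 s4 v1 v2 v3 v4 + cmp u1 u2 u3 u4 t1 t2 t3 t4
   + cmp u1 u2 u3 u4 v1 v2 v3 v4).
Proof. rewrite /cmp; ring. Qed.

Lemma cmp_Dent (a b lam mu lam' mu' : C) (ik im : bool) :
  cmp (Dent a b lam mu false im) (Dent a b lam mu true im) (Dent a b lam mu ik false)
      (Dent a b lam mu ik true)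
      (Dent a b lam' mu' false im) (Dent a b lam' mu' true im) (Dent a b lam' mu' ik false)
      (Dent a b lam' mu' ik true) = 0.
Proof. by case: ik; case: im; rewrite /cmp /Dent; ring. Qed.

Lemma half_leq_self p : (p./2 <= p)%N.
Proof. by rewrite leq_half_double -addnn; apply: leqW; apply: leq_addr. Qed.

Lemma odd_j0 m : odd (j0 m) = false. Proof. by rewrite /j0 odd_double. Qed.
Lemma odd_j1 m : odd (j1 m) = true. Proof. by rewrite /j1 /= odd_double. Qed.
Lemma half_j0 m : (j0 m)./2 = m./2. Proof. by rewrite /j0 half_dbl. Qed.
Lemma half_j1 m : (j1 m)./2 = m./2. Proof. by rewrite /j1 half_dbl1. Qed.

Lemma key (XX : set (set nat)) (alpha : set nat -> R)
  (hwide : wide XX)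
  (halpha : forall X, XX X -> 71%:R / 72%:R < alpha X <= 1)
  (S T : op R) (hS : Mset XX alpha S) (hT : Mset XX alpha T) :
  forall eps : R, 0 < eps -> exists Q, forall k m, (Q <= m./2)%N -> k./2 = m./2 ->
    sqmod (cm S T k m) <= eps.
Proof.
move=> eps he; apply: contrapT => H.
pose Y := [set n | exists k m, m./2 = n /\ k./2 = n /\ eps < sqmod (cm S T k m)].
have hY : infinite_set Y.
  apply: unb_inf => N; apply: contrapT => HN; apply: H; exists N => k m hm hkm.
  rewrite leNgt; apply/negP => hlt; apply: HN; exists (m./2); split => //.
  by exists k, m.
have [X XXX hXY] := hwide _ hY.
have [S' [K [hD hK hKX hDK]]] := hS.2 X XXX.
have [T' [K' [hD' hK' hKX' hDK']]] := hT.2 X XXX.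
have [cS [cS0 hcS]] := entry_bound hS.1.1.
have [cT [cT0 hcT]] := entry_bound hT.1.1.
have [cK [cK0 hcK]] := entry_bound hK.1.
have [cK' [cK'0 hcK']] := entry_bound hK'.1.
pose A := 2 * cS + 2 * cK; pose B := 2 * cT + 2 * cK'.
have A0 : 0 <= A by rewrite /A; lra.
have B0 : 0 <= B by rewrite /B; lra.
pose d := Num.min 1 (eps / (64 * (A + B + 1))).
have hP : 0 < 64 * (A + B + 1) by lra.
have d0 : 0 < d by rewrite lt_min ltr01 /= divr_gt0.
have d1 : d <= 1 by rewrite ge_min lexx.
have d2 : d * (64 * (A + B + 1)) <= eps.
  rewrite -ler_pdivlMr //; by rewrite ge_min lexx orbT.
have [N1 hN1] := cpt_entries hK hKX.1 d0.
have [N2 hN2] := cpt_entries hK' hKX'.1 d0.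
have [n [hn [Xn [k [m [hm [hk hcm]]]]]]] := inf_unb hXY (N1 + N2).
have hal : 0 <= alpha X <= 1.
  have /andP[h1 h2] := halpha X XXX; apply/andP; split => //.
  apply: le_trans (ltW h1); apply: divr_ge0; apply: ler0n.
have [lam [mu hSD]] := Dent_lemma hD Xn hal.
have [lam' [mu' hTD]] := Dent_lemma hD' Xn hal.
have decS : forall p q, p./2 = n -> q./2 = n -> entry S p q = entry S' p q + entry K p q.
  by move=> p q hp hq; apply: (entry_DK hDK); rewrite ?hp ?hq.
have decT : forall p q, p./2 = n -> q./2 = n -> entry T p q = entry T' p q + entry K' p q.
  by move=> p q hp hq; apply: (entry_DK hDK'); rewrite ?hp ?hq.
have bK : forall p q, p./2 = n -> sqmod (entry K p q) <= d.
  move=> p q hp; apply: ltW; apply: hN1.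
  have : (N1 <= n)%N by apply: leq_trans (leq_addr _ _) hn.
  by rewrite -hp => h; apply: leq_trans h _; apply: half_leq_self.
have bK' : forall p q, p./2 = n -> sqmod (entry K' p q) <= d.
  move=> p q hp; apply: ltW; apply: hN2.
  have : (N2 <= n)%N by apply: leq_trans (leq_addl _ _) hn.
  by rewrite -hp => h; apply: leq_trans h _; apply: half_leq_self.
have bS' : forall p q, p./2 = n -> q./2 = n -> sqmod (entry S' p q) <= A.
  move=> p q hp hq.
  have -> : entry S' p q = entry S p q - entry K p q by rewrite decS //; ring.
  apply: le_trans (sqmodB _ _) _; have := hcS p q; have := hcK p q; rewrite /A; lra.
have bT' : forall p q, p./2 = n -> q./2 = n -> sqmod (entry T' p q) <= B.
  move=> p q hp hq.
  have -> : entry T' p q = entry T p q - entry K' p q by rewrite decT //; ring.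
  apply: le_trans (sqmodB _ _) _; have := hcT p q; have := hcK' p q; rewrite /B; lra.
have h0 : (j0 m)./2 = n by rewrite half_j0.
have h1 : (j1 m)./2 = n by rewrite half_j1.
have c0 : cmp (entry S' (j0 m) m) (entry S' (j1 m) m) (entry S' k (j0 m)) (entry S' k (j1 m))
  (entry T' (j0 m) m) (entry T' (j1 m) m) (entry T' k (j0 m)) (entry T' k (j1 m)) = 0.
  by rewrite !hSD // !hTD // !odd_j0 !odd_j1 cmp_Dent.
move: hcm; rewrite /cm !decS // !decT // cmp_split c0 add0r => hcm.
have c1 := cmp_bound (bS' _ _ h0 hm) (bS' _ _ h1 hm) (bS' _ _ hk h0) (bS' _ _ hk h1)
   (bK' (j0 m) m h0) (bK' (j1 m) m h1) (bK' k (j0 m) hk) (bK' k (j1 m) hk).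
have c2 := cmp_bound (bK (j0 m) m h0) (bK (j1 m) m h1) (bK k (j0 m) hk) (bK k (j1 m) hk)
   (bT' _ _ h0 hm) (bT' _ _ h1 hm) (bT' _ _ hk h0) (bT' _ _ hk h1).
have c3 := cmp_bound (bK (j0 m) m h0) (bK (j1 m) m h1) (bK k (j0 m) hk) (bK k (j1 m) hk)
   (bK' (j0 m) m h0) (bK' (j1 m) m h1) (bK' k (j0 m) hk) (bK' k (j1 m) hk).
move: hcm c1 c2 c3; set r1 := cmp _ _ _ _ (entry K' _ _) _ _ _.
set r2 := cmp (entry K _ _) _ _ _ (entry T' _ _) _ _ _.
set r3 := cmp (entry K _ _) _ _ _ (entry K' _ _) _ _ _ => hcm c1 c2 c3.
have s1 := sqmodD (r1 + r2) r3; have s2 := sqmodD r1 r2.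
have dd : d * d <= d * 1 by apply: ler_wpM2l; [apply: ltW|].
have e1 : d * (64 * (A + B + 1)) = 64 * (A * d) + 64 * (d * B) + 64 * (d * 1) by ring.
lra.
Qed.

End Key.

Section Fin.
Variable R : realType.
Local Notation C := R[i].

Lemma sum_ind (Q p : nat) (h : R) : 0 <= h ->
  \sum_(q < p) (if (q < Q)%N then h else 0) <= Q%:R * h.
Proof.
move=> h0.
have : \sum_(q < p) (if (q < Q)%N then h else 0) = (minn p Q)%:R * h.
  elim: p => [|p IH]; first by rewrite big_ord0 min0n mul0r.
  rewrite big_ord_recr /= IH; case: (ltnP p Q) => hp.
    have -> : minn p.+1 Q = p.+1 by apply/minn_idPl.
    by rewrite -addn1 natrD mulrDl mul1r.
  have -> : minn p.+1 Q = Q by apply/minn_idPr; apply: leqW.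
  by rewrite addr0.
move=> ->; apply: ler_wpM2r => //; rewrite ler_nat; apply: geq_minr.
Qed.

Lemma psum2_double (y : vec R) p : psum2 y p.*2 = \sum_(q < p) (sqmod (y q.*2) + sqmod (y q.*2.+1)).
Proof.
elim: p => [|p IH]; first by rewrite big_ord0 psum2_0.
rewrite doubleS !psum2S IH big_ord_recr /=; by rewrite -addrA.
Qed.

Lemma fin_ev (P : nat -> nat -> nat -> Prop) K :
  (forall k, (k < K)%N -> exists N, forall a b, (N <= a)%N -> (N <= b)%N -> P k a b) ->
  exists N, forall k a b, (k < K)%N -> (N <= a)%N -> (N <= b)%N -> P k a b.
Proof.
elim: K => [|K IH] h; first by exists 0%N.
have [N1 h1] := IH (fun k hk => h k (ltnW hk)).
have [N2 h2] := h K (ltnSn _).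
exists (maxn N1 N2) => k a b; rewrite ltnS leq_eqVlt => /orP[/eqP ->|hk] ha hb.
  by apply: h2; [apply: leq_trans (leq_maxr _ _) ha | apply: leq_trans (leq_maxr _ _) hb].
by apply: h1 => //; [apply: leq_trans (leq_maxl _ _) ha | apply: leq_trans (leq_maxl _ _) hb].
Qed.

Lemma sqmod_lin (c0 c1 u v : C) :
  sqmod (c0 * u + c1 * v) <= 2 * (sqmod c0 * sqmod u) + 2 * (sqmod c1 * sqmod v).
Proof. by rewrite -!sqmodM; apply: sqmodD. Qed.

End Fin.

Unset Implicit Arguments.

Theorem lemma4p13 (R : realType) (XX : set (set nat)) (alpha : set nat -> R)
  (hwide : wide XX)
  (halpha : forall X, XX X -> 71%:R / 72%:R < alpha X <= 1)
  (S T : op R) (hS : Mset XX alpha S) (hT : Mset XX alpha T) :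
  compact_op (opsub (comp S T) (comp T S)).
Proof.
have hSA := hS.1; have hTA := hT.1.
have hSb := hSA.1; have hTb := hTA.1.
have [cS [cS0 hcS]] := bo_bound hSb; have [cT [cT0 hcT]] := bo_bound hTb.
split.
  split.
  - by move=> x hx; apply: ell2_sub; [apply: (bo_l2 hSb (bo_l2 hTb hx)) | apply: (bo_l2 hTb (bo_l2 hSb hx))].
  - move=> x y hx hy; rewrite /opsub /comp (bo_add hTb hx hy) (bo_add hSb hx hy).
    rewrite (bo_add hSb (bo_l2 hTb hx) (bo_l2 hTb hy)) (bo_add hTb (bo_l2 hSb hx) (bo_l2 hSb hy)).
    by apply: funext => k; rewrite /vsub /vadd; ring.
  - move=> c x hx; rewrite /opsub /comp (bo_scale _ hTb hx) (bo_scale _ hSb hx).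
    rewrite (bo_scale _ hSb (bo_l2 hTb hx)) (bo_scale _ hTb (bo_l2 hSb hx)).
    by apply: funext => k; rewrite /vsub /vscale; ring.
  - exists (2 * (cS * cT) + 2 * (cT * cS)); split.
      by apply: addr_ge0; apply: mulr_ge0 => //; apply: mulr_ge0.
    move=> x M hx hM n.
    have a1 := hcS _ _ (bo_l2 hTb hx) (hcT _ _ hx hM) n.
    have a2 := hcT _ _ (bo_l2 hSb hx) (hcS _ _ hx hM) n.
    have := @psum2_le R (opsub (comp S T) (comp T S) x) (S (T x)) (T (S x)) 2 2
      (fun k => sqmodB (S (T x) k) (T (S x) k)) n.
    have -> : (2 * (cS * cT) + 2 * (cT * cS)) * M = 2 * (cS * (cT * M)) + 2 * (cT * (cS * M)) by ring.
    lra.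
move=> x M hx hM.
have hB : forall j k, sqmod (x j k) <= M := fun j k => le_trans (sqmod_le_psum _ _) (hM j k.+1).
have [d [dinc dcau]] := diag hB.
exists d; split => // eps he.
have [Bc [Bc0 hBc]] := cm_bound hSb hTb.
have hM0 : 0 <= M by have := hM 0%N 0%N; rewrite psum2_0.
pose dl := eps / (32 * (M + 1)).
have dl0 : 0 < dl by apply: divr_gt0 => //; lra.
have hdl : dl * (32 * (M + 1)) = eps by rewrite /dl divfK //; apply/eqP => h; lra.
have [Q hQ] := key hwide halpha hS hT dl0.
pose P := (Q%:R + 1) * (Bc + 1).
have P0 : 0 < P by apply: mulr_gt0; [have := ler0n R Q | ]; lra.
pose eta := eps / (16 * P).
have eta0 : 0 < eta by apply: divr_gt0 => //; lra.
have heta : eta * (16 * P) = eps by rewrite /eta divfK //; apply/eqP => h; lra.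
have [N hN] := @fin_ev (fun k a b => sqmod (x (d a) k - x (d b) k) <= eta) Q.*2
   (fun k _ => dcau k eta eta0).
exists N => a b ha hb n.
pose U := opsub (comp S T) (comp T S).
have hD : forall m, vsub (U (x (d a))) (U (x (d b))) m =
    cm S T (j0 m) m * (x (d a) (j0 m) - x (d b) (j0 m))
  + cm S T (j1 m) m * (x (d a) (j1 m) - x (d b) (j1 m)).
  move=> m; have e1 := U_formula m hSA hTA (hx (d a)).
  have e2 := U_formula m hSA hTA (hx (d b)).
  rewrite /vsub /U e1 e2; ring.
have jj0 : forall q, j0 q.*2 = q.*2 by move=> q; rewrite /j0 half_dbl.
have jj1 : forall q, j1 q.*2 = q.*2.+1 by move=> q; rewrite /j1 half_dbl.
have jj2 : forall q, j0 q.*2.+1 = q.*2 by move=> q; rewrite /j0 half_dbl1.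
have jj3 : forall q, j1 q.*2.+1 = q.*2.+1 by move=> q; rewrite /j1 half_dbl1.
pose Dl k := sqmod (x (d a) k - x (d b) k).
have hblk : forall q : nat,
    sqmod (vsub (U (x (d a))) (U (x (d b))) q.*2) + sqmod (vsub (U (x (d a))) (U (x (d b))) q.*2.+1)
    <= (if (q < Q)%N then 8 * (Bc * eta) else 0) + 4 * (dl * (Dl q.*2 + Dl q.*2.+1)).
  move=> q; rewrite !hD jj0 jj1 jj2 jj3.
  have l1 := sqmod_lin (cm S T q.*2 q.*2) (cm S T q.*2.+1 q.*2)
     (x (d a) q.*2 - x (d b) q.*2) (x (d a) q.*2.+1 - x (d b) q.*2.+1).
  have l2 := sqmod_lin (cm S T q.*2 q.*2.+1) (cm S T q.*2.+1 q.*2.+1)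
     (x (d a) q.*2 - x (d b) q.*2) (x (d a) q.*2.+1 - x (d b) q.*2.+1).
  move: l1 l2; rewrite -/(Dl q.*2) -/(Dl q.*2.+1) => l1 l2.
  have g0 := sqmod_ge0 (x (d a) q.*2 - x (d b) q.*2).
  have g1 := sqmod_ge0 (x (d a) q.*2.+1 - x (d b) q.*2.+1).
  move: g0 g1; rewrite -/(Dl q.*2) -/(Dl q.*2.+1) => g0 g1.
  case: (ltnP q Q) => hq.
    have t0 : Dl q.*2 <= eta by apply: hN => //; rewrite ltn_double.
    have t1 : Dl q.*2.+1 <= eta.
      by apply: hN => //; rewrite -doubleS leq_double.
    have pr : forall k' m' k, Dl k <= eta -> sqmod (cm S T k' m') * Dl k <= Bc * eta.
      move=> k' m' k hk; apply: ler_pM => //; [apply: sqmod_ge0 | apply: sqmod_ge0].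
    have := pr q.*2 q.*2 _ t0; have := pr q.*2.+1 q.*2 _ t1.
    have := pr q.*2 q.*2.+1 _ t0; have := pr q.*2.+1 q.*2.+1 _ t1.
    have : 0 <= dl * (Dl q.*2 + Dl q.*2.+1) by apply: mulr_ge0; lra.
    move=> *; lra.
  have pr : forall k m c, k./2 = m./2 -> (Q <= m./2)%N -> c = cm S T k m ->
      sqmod c * Dl k <= dl * Dl k.
    by move=> k m c hkm hm ->; apply: ler_wpM2r; [apply: sqmod_ge0 | apply: hQ].
  have h0 : (q.*2)./2 = q by apply: half_dbl.
  have h1 : (q.*2.+1)./2 = q by apply: half_dbl1.
  have hm0 : (Q <= (q.*2)./2)%N by rewrite h0.
  have hm1 : (Q <= (q.*2.+1)./2)%N by rewrite h1.
  have e10 : (q.*2.+1)./2 = (q.*2)./2 by rewrite h0 h1.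
  have e01 : (q.*2)./2 = (q.*2.+1)./2 by rewrite h0 h1.
  have := pr q.*2 q.*2 _ (erefl _) hm0 (erefl _).
  have := pr q.*2.+1 q.*2 _ e10 hm0 (erefl _).
  have := pr q.*2 q.*2.+1 _ e01 hm1 (erefl _).
  have := pr q.*2.+1 q.*2.+1 _ (erefl _) hm1 (erefl _).
  move=> *; lra.
have mono : psum2 (vsub (U (x (d a))) (U (x (d b)))) n <=
            psum2 (vsub (U (x (d a))) (U (x (d b)))) n.*2.
  by apply: psum2_mono; rewrite -addnn leq_addr.
apply: le_trans mono _; rewrite psum2_double.
apply: le_trans (ler_sum _ (fun (q : 'I_n) _ => hblk q)) _.
rewrite big_split /= -!mulr_sumr.
have ps : \sum_(q < n) (Dl q.*2 + Dl q.*2.+1) = psum2 (vsub (x (d a)) (x (d b))) n.*2.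
  by rewrite psum2_double.
have p4 : psum2 (vsub (x (d a)) (x (d b))) n.*2 <= 4 * M.
  have := @psum2_le R (vsub (x (d a)) (x (d b))) (x (d a)) (x (d b)) 2 2
      (fun k => sqmodB (x (d a) k) (x (d b) k)) n.*2.
  have := hM (d a) n.*2; have := hM (d b) n.*2; lra.
rewrite ps.
have si := sum_ind Q n (mulr_ge0 (ler0n R 8) (mulr_ge0 Bc0 (ltW eta0))).
have f1 : dl * psum2 (vsub (x (d a)) (x (d b))) n.*2 <= dl * (4 * M) by apply: ler_wpM2l => //; apply: ltW.
have f2 : Q%:R * Bc * eta <= P * eta.
  apply: ler_wpM2r; first exact: ltW.
  rewrite /P; have := ler0n R Q; nra.
have := ler0n R Q.
move=> *; nra.
Qed.
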